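(* Let $T$ be a triangle and let $\Gamma_{h,T}$ be an open line segment with endpoints on $\partial T$ that divides $T$ into two nonempty open parts $T_h^+$ and $T_h^-$; let $\mathbf{n}_h$ be the unit normal of $\Gamma_{h,T}$ pointing into $T_h^+$ and $\mathbf{t}_h=R_{-\pi/2}\mathbf{n}_h$. For $k=1,2$ consider pairs $(\mathbf{v}^{J_k},q^{J_k})$, piecewise defined by $\mathbf{v}^{J_k}=\mathbf{v}^{J_k,\pm}$, $q^{J_k}=q^{J_k,\pm}$ on $T_h^\pm$, with $\mathbf{v}^{J_k,\pm}\in P_1(T)^2$, $q^{J_k,\pm}\in P_0(T)$, such that $N_{i,T}(\mathbf{v}^{J_k},q^{J_k})=0$ for $i=1,\dots,7$, $[\![\mathbf{v}^{J_k,\pm}]\!]=\mathbf{0}$ on $\Gamma_{h,T}$, $[\![\nabla\cdot\mathbf{v}^{J_k,\pm}]\!]=0$, and $$[\![\sigma(1,\mathbf{v}^{J_1,\pm},q^{J_1,\pm})\mathbf{n}_h]\!]=\mathbf{n}_h,\qquad [\![\sigma(1,\mathbf{v}^{J_2,\pm},q^{J_2,\pm})\mathbf{n}_h]\!]=\mathbf{t}_h.$$ Then such pairs exist, are unique, and are given by $$\mathbf{v}^{J_1}=\mathbf{0},\quad q^{J_1}=z-\pi^0_{h,T}z,\qquad \mathbf{v}^{J_2}=(w-\pi^{CR}_{h,T}w)\mathbf{t}_h,\quad q^{J_2}=0,$$ where $z=-1$ on $T_h^+$, $z=0$ on $T_h^-$, and $w(\mathbf{x})=\operatorname{dist}(\mathbf{x},\Gamma_{h,T})$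 on $T_h^+$, $w=0$ on $T_h^-$.
   Context: $R_{-\pi/2}$ denotes rotation by $90^\circ$ clockwise. $\sigma(\mu,\mathbf{v},q)=2\mu\boldsymbol{\epsilon}(\mathbf{v})-q\mathbb{I}$ with $\boldsymbol{\epsilon}(\mathbf{v})=\frac12(\nabla\mathbf{v}+(\nabla\mathbf{v})^T)$. For polynomials $g^\pm$ (viewed as defined on all of $T$), $[\![g^\pm]\!]=g^+-g^-$. With edges $e_1,e_2,e_3$ of $T$ and $\mathbf{v}=(v_1,v_2)^T$, the degrees of freedom are $N_{i,T}(\mathbf{v},q)=|e_i|^{-1}\int_{e_i}v_1$, $N_{3+i,T}(\mathbf{v},q)=|e_i|^{-1}\int_{e_i}v_2$ ($i=1,2,3$), $N_{7,T}(\mathbf{v},q)=|T|^{-1}\int_T q$. For a function $v$ with well-defined edge integrals, $\pi^{CR}_{h,T}v$ is the unique element of $P_1(T)$ with $\int_{e_i}\pi^{CR}_{h,T}v=\int_{e_i}v$, $i=1,2,3$; $\pi^0_{h,T}q=|T|^{-1}\int_Tq$. *)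

(* Defs.v *)
From HB Require Import structures.
From mathcomp Require Import all_boot all_order all_algebra.
From mathcomp Require Import all_classical all_reals all_analysis.
Set Implicit Arguments. Unset Strict Implicit. Unset Printing Implicit Defensive.
Import Order.TTheory GRing.Theory Num.Theory.
Local Open Scope classical_set_scope.
Local Open Scope ring_scope.

Section Defs.
Variable R : realType.

Definition pt := (R * R)%type.
Definition dot (u v : pt) : R := u.1 * v.1 + u.2 * v.2.
Definition cross (u v : pt) : R := u.1 * v.2 - u.2 * v.1.
Definition psub (u v : pt) : pt := (u.1 - v.1, u.2 - v.2).
Definition padd (u v : pt) : pt := (u.1 + v.1, u.2 + v.2).
Definition pscale (s : R) (u : pt) : pt := (s * u.1, s * u.2).

Definition rot_m90 (u : pt) : pt := (u.2, - u.1).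

(* P1 scalar polynomials a*x1 + b*x2 + c, coefficient representation ((a,b),c) *)
Definition P1 := (R * R * R)%type.
Definition ev1 (p : P1) (x : pt) : R := p.1.1 * x.1 + p.1.2 * x.2 + p.2.
Definition P1sub (p r : P1) : P1 := (p.1.1 - r.1.1, p.1.2 - r.1.2, p.2 - r.2).
Definition P1scale (s : R) (p : P1) : P1 := (s * p.1.1, s * p.1.2, s * p.2).
Definition P1zero : P1 := (0, 0, 0).

Definition P1v := (P1 * P1)%type.
Definition evv (v : P1v) (x : pt) : pt := (ev1 v.1 x, ev1 v.2 x).
Definition P1vzero : P1v := (P1zero, P1zero).
Definition P1times_vec (p : P1) (t : pt) : P1v := (P1scale t.1 p, P1scale t.2 p).

Definition dv (v : P1v) (i j : bool) : R :=
  let vi := if i then v.2 else v.1 in if j then vi.1.2 else vi.1.1.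
(* indices: false = 1, true = 2 *)
Definition divv (v : P1v) : R := dv v false false + dv v true true.
Definition eps (v : P1v) (i j : bool) : R := (dv v i j + dv v j i) / 2.
Definition sigma (mu : R) (v : P1v) (q : R) (i j : bool) : R :=
  2 * mu * eps v i j - (if i == j then q else 0).
Definition sigma_n (mu : R) (v : P1v) (q : R) (n : pt) : pt :=
  (sigma mu v q false false * n.1 + sigma mu v q false true * n.2,
   sigma mu v q true false * n.1 + sigma mu v q true true * n.2).

Definition comb3 (a b c : pt) (l1 l2 l3 : R) : pt :=
  (l1 * a.1 + l2 * b.1 + l3 * c.1, l1 * a.2 + l2 * b.2 + l3 * c.2).
Definition tri_closed (a b c : pt) : set pt :=
  [set x | exists l1 l2 l3, [/\ 0 <= l1, 0 <= l2, 0 <= l3, l1 + l2 + l3 = 1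
                                & x = comb3 a b c l1 l2 l3]].
Definition tri_open (a b c : pt) : set pt :=
  [set x | exists l1 l2 l3, [/\ 0 < l1, 0 < l2, 0 < l3, l1 + l2 + l3 = 1
                                & x = comb3 a b c l1 l2 l3]].
Definition edges (a b c : pt) : seq (pt * pt) := [:: (b, c); (c, a); (a, b)].

(* interface Gamma_{h,T} = {x in int T | n.x = d}; T^+ = {n.x > d}, T^- = {n.x < d} *)
Definition Gamma (a b c n : pt) (d : R) : set pt :=
  [set x | tri_open a b c x /\ dot n x = d].
Definition Tplus (a b c n : pt) (d : R) : set pt :=
  [set x | tri_open a b c x /\ d < dot n x].
Definition Tminus (a b c n : pt) (d : R) : set pt :=
  [set x | tri_open a b c x /\ dot n x < d].

Definition pw (X : Type) (n : pt) (d : R) (fp fm : pt -> X) : pt -> X :=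
  fun x => if d < dot n x then fp x else fm x.

(* |e|^{-1} \int_e f  computed through the arc-length parametrization of e=[p,q] *)
Definition edge_mean (f : pt -> R) (e : pt * pt) : R :=
  Rintegral (@lebesgue_measure R) `[0, 1]%classic
    (fun t : R => f (padd e.1 (pscale t (psub e.2 e.1)))).

Definition leb2 := ((@lebesgue_measure R) \x (@lebesgue_measure R))%E.
Definition area (a b c : pt) : R := fine (leb2 (tri_closed a b c)).
Definition cell_mean (a b c : pt) (f : pt -> R) : R :=
  Rintegral leb2 (tri_closed a b c) f / area a b c.

(* degrees of freedom N_{1..7,T} *)
Definition dofs_vanish (a b c : pt) (v : pt -> pt) (q : pt -> R) : Prop :=
  (forall e, e \in edges a b c -> edge_mean (fun x => (v x).1) e = 0) /\
  (forall e, e \in edges a b c -> edge_mean (fun x => (v x).2) e = 0) /\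
  cell_mean a b c q = 0.

Definition Jcond (a b c n : pt) (d : R) (g : pt)
  (vp vm : P1v) (qp qm : R) : Prop :=
  [/\ dofs_vanish a b c (pw n d (evv vp) (evv vm)) (pw n d (fun=> qp) (fun=> qm)),
      (forall x, Gamma a b c n d x -> evv vp x = evv vm x),
      divv vp = divv vm
    & psub (sigma_n 1 vp qp n) (sigma_n 1 vm qm n) = g].

Definition piCR (a b c : pt) (w : pt -> R) : P1 :=
  xget P1zero [set p : P1 | forall e, e \in edges a b c ->
                              edge_mean (ev1 p) e = edge_mean w e].
Definition pi0 (a b c : pt) (q : pt -> R) : R := cell_mean a b c q.

(* distance to the line containing Gamma {y | n.y = d}, for |n| = 1 *)
Definition dist_line (n : pt) (d : R) (x : pt) : R := `|dot n x - d|.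

Definition zfun (n : pt) (d : R) : pt -> R := pw n d (fun=> -1) (fun=> 0).
Definition wfun (n : pt) (d : R) : pt -> R := pw n d (dist_line n d) (fun=> 0).

End Defs.

(* Main.v *)
Require Import Defs.
From HB Require Import structures.
From mathcomp Require Import all_boot all_order all_algebra.
From mathcomp Require Import all_classical all_reals all_analysis.
From mathcomp Require Import ring lra unstable measurable_realfun.
Import Order.TTheory GRing.Theory Num.Theory numFieldNormedType.Exports.
Local Open Scope classical_set_scope.
Local Open Scope ring_scope.
Set Implicit Arguments. Unset Strict Implicit.
Section S.
Context {R : realType}.
Implicit Types (a b c x : pt R).

Definition Dt a b c : R := cross (psub b a) (psub c a).
Definition bary2 a b c x : R := cross (psub x a) (psub c a) / Dt a b c.
Definition bary3 a b c x : R := cross (psub b a) (psub x a) / Dt a b c.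
Definition bary1 a b c x : R := 1 - bary2 a b c x - bary3 a b c x.

Lemma bary_comb a b c l1 l2 l3 : Dt a b c != 0 -> l1 + l2 + l3 = 1 ->
  [/\ bary1 a b c (comb3 a b c l1 l2 l3) = l1,
      bary2 a b c (comb3 a b c l1 l2 l3) = l2 &
      bary3 a b c (comb3 a b c l1 l2 l3) = l3].
Proof.
move=> D0 hs; have -> : l1 = 1 - l2 - l3 by lra.
rewrite /bary1 /bary2 /bary3 /cross /psub /comb3 /Dt /cross /psub /= in D0 *.
split; field => //.
Qed.

Lemma comb_bary a b c x : Dt a b c != 0 ->
  x = comb3 a b c (bary1 a b c x) (bary2 a b c x) (bary3 a b c x).
Proof.
move=> D0; case: x => x1 x2.
rewrite /bary1 /bary2 /bary3 /cross /psub /comb3 /Dt /cross /psub /= in D0 *.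
congr pair; field => //.
Qed.

Lemma tri_closedE a b c : Dt a b c != 0 ->
  tri_closed a b c = [set x | [/\ 0 <= bary1 a b c x, 0 <= bary2 a b c x & 0 <= bary3 a b c x]].
Proof.
move=> D0; apply/seteqP; split => x /=.
  case=> l1 [l2 [l3 [h1 h2 h3 hs ->]]].
  by have [-> -> ->] := bary_comb D0 hs.
case=> h1 h2 h3; exists (bary1 a b c x), (bary2 a b c x), (bary3 a b c x); split => //.
  by rewrite /bary1; ring.
exact: comb_bary.
Qed.

Lemma tri_openE a b c : Dt a b c != 0 ->
  tri_open a b c = [set x | [/\ 0 < bary1 a b c x, 0 < bary2 a b c x & 0 < bary3 a b c x]].
Proof.
move=> D0; apply/seteqP; split => x /=.
  case=> l1 [l2 [l3 [h1 h2 h3 hs ->]]].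
  by have [-> -> ->] := bary_comb D0 hs.
case=> h1 h2 h3; exists (bary1 a b c x), (bary2 a b c x), (bary3 a b c x); split => //.
  by rewrite /bary1; ring.
exact: comb_bary.
Qed.

Notation MT := (measurableTypeR R * measurableTypeR R)%type.
Definition aff (al be ga : R) : pt R -> R := fun x => al * x.1 + be * x.2 + ga.

Lemma aff_mfun al be ga : measurable_fun (setT : set MT) (aff al be ga).
Proof.
apply: measurable_funD; last exact: measurable_cst.
apply: measurable_funD; apply: measurable_funM; try exact: measurable_cst.
exact: measurable_fst. exact: measurable_snd.
Qed.

Lemma ge0_meas (f : pt R -> R) : measurable_fun (setT : set MT) f ->
  measurable [set x : MT | 0 <= f x].
Proof.
move=> mf; have := mf measurableT _ (measurable_itv `[0%R, +oo[).
rewrite setTI; congr measurable; apply/seteqP; split => x /=; rewrite in_itv /= andbT //.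
Qed.

Lemma gt0_meas (f : pt R -> R) : measurable_fun (setT : set MT) f ->
  measurable [set x : MT | 0 < f x].
Proof.
move=> mf; have := mf measurableT _ (measurable_itv `]0%R, +oo[).
rewrite setTI; congr measurable; apply/seteqP; split => x /=; rewrite in_itv /= andbT //.
Qed.

Lemma bary2_mfun a b c : Dt a b c != 0 -> measurable_fun (setT : set MT) (bary2 a b c).
Proof.
move=> D0.
have -> : bary2 a b c = aff ((c.2 - a.2) / Dt a b c) (- (c.1 - a.1) / Dt a b c)
   ((- a.1 * (c.2 - a.2) + a.2 * (c.1 - a.1)) / Dt a b c).
  apply/funext => x; rewrite /aff /bary2 /cross /psub /=; field => //.
exact: aff_mfun.
Qed.

Lemma bary3_mfun a b c : Dt a b c != 0 -> measurable_fun (setT : set MT) (bary3 a b c).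
Proof.
move=> D0.
have -> : bary3 a b c = aff (- (b.2 - a.2) / Dt a b c) ((b.1 - a.1) / Dt a b c)
   ((a.1 * (b.2 - a.2) - a.2 * (b.1 - a.1)) / Dt a b c).
  apply/funext => x; rewrite /aff /bary3 /cross /psub /=; field => //.
exact: aff_mfun.
Qed.

Lemma bary1_mfun a b c : Dt a b c != 0 -> measurable_fun (setT : set MT) (bary1 a b c).
Proof.
move=> D0; apply: measurable_funB; last exact: bary3_mfun.
apply: measurable_funB; last exact: bary2_mfun.
exact: measurable_cst.
Qed.

Lemma tri_closed_meas a b c : Dt a b c != 0 -> measurable (tri_closed a b c : set MT).
Proof.
move=> D0; rewrite tri_closedE //.
have -> : [set x | [/\ 0 <= bary1 a b c x, 0 <= bary2 a b c x & 0 <= bary3 a b c x]] =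
  [set x : MT | 0 <= bary1 a b c x] `&` [set x : MT | 0 <= bary2 a b c x] `&` [set x : MT | 0 <= bary3 a b c x].
  by apply/seteqP; split => x /=; [case=> *| case=> [[]] *].
apply: measurableI; [apply: measurableI|]; apply: ge0_meas;
  [exact: bary1_mfun|exact: bary2_mfun|exact: bary3_mfun].
Qed.

Lemma leb2_box (x1 y1 x2 y2 : R) : x1 <= y1 -> x2 <= y2 ->
  leb2 (R:=R) (`[x1, y1] `*` `[x2, y2]) = ((y1 - x1) * (y2 - x2))%:E.
Proof.
move=> h1 h2; rewrite /leb2 product_measure1E; try exact: measurable_itv.
change (lebesgue_measure `[x1, y1]%classic * lebesgue_measure `[x2, y2]%classic = ((y1 - x1) * (y2 - x2))%:E)%E.
rewrite !lebesgue_measure_itv /= !lte_fin.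
case: (ltrP x1 y1) => l1; case: (ltrP x2 y2) => l2.
- by rewrite -!EFinD -EFinM.
- have -> : x2 = y2 by apply/eqP; rewrite eq_le h2 l2.
  by rewrite subrr mulr0 mule0.
- have -> : x1 = y1 by apply/eqP; rewrite eq_le h1 l1.
  by rewrite subrr mul0r mul0e.
- have -> : x1 = y1 by apply/eqP; rewrite eq_le h1 l1.
  by rewrite subrr mul0r mul0e.
Qed.

Lemma norm_comb (l y : R) : 0 <= l <= 1 -> - `|y| <= l * y <= `|y|.
Proof.
move=> /andP[l0 l1]; rewrite -ler_norml normrM ger0_norm //.
by rewrite ler_piMl.
Qed.

Definition bigM a b c : R := `|a.1| + `|b.1| + `|c.1| + `|a.2| + `|b.2| + `|c.2|.

Lemma tri_sub_box a b c :
  tri_closed a b c `<=` `[- bigM a b c, bigM a b c] `*` `[- bigM a b c, bigM a b c].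
Proof.
move=> x [l1 [l2 [l3 [h1 h2 h3 hs ->]]]].
have i1 : 0 <= l1 <= 1 by apply/andP; split; lra.
have i2 : 0 <= l2 <= 1 by apply/andP; split; lra.
have i3 : 0 <= l3 <= 1 by apply/andP; split; lra.
have := normr_ge0 a.1; have := normr_ge0 b.1; have := normr_ge0 c.1.
have := normr_ge0 a.2; have := normr_ge0 b.2; have := normr_ge0 c.2.
move: (norm_comb a.1 i1) (norm_comb b.1 i2) (norm_comb c.1 i3).
move: (norm_comb a.2 i1) (norm_comb b.2 i2) (norm_comb c.2 i3).
rewrite /bigM /comb3 /= !in_itv /= => /andP[? ?] /andP[? ?] /andP[? ?] /andP[? ?] /andP[? ?] /andP[? ?] *.
split; apply/andP; split; lra.
Qed.

Lemma leb2_tri_fin a b c : Dt a b c != 0 -> (leb2 (R:=R) (tri_closed a b c) <= ((2 * bigM a b c) * (2 * bigM a b c))%:E)%E.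
Proof.
move=> D0.
have hM : 0 <= bigM a b c by rewrite /bigM; have := normr_ge0 a.1; have := normr_ge0 b.1; have := normr_ge0 c.1;
  have := normr_ge0 a.2; have := normr_ge0 b.2; have := normr_ge0 c.2; lra.
have -> : 2 * bigM a b c = bigM a b c - (- bigM a b c) by ring.
rewrite -(@leb2_box (- bigM a b c) (bigM a b c) (- bigM a b c) (bigM a b c)); [|lra|lra].
apply: le_measure; rewrite ?inE.
- exact: tri_closed_meas.
- by apply: measurableX; exact: measurable_itv.
- exact: tri_sub_box.
Qed.

Lemma cross_bound (v u : pt R) (r K : R) : `|v.1| <= r -> `|v.2| <= r ->
  `|u.1| <= K -> `|u.2| <= K -> `|cross v u| <= 2 * r * K.
Proof.
move=> h1 h2 h3 h4; rewrite /cross.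
apply: (le_trans (ler_normB _ _)); rewrite !normrM.
have := normr_ge0 v.1; have := normr_ge0 v.2; have := normr_ge0 u.1; have := normr_ge0 u.2.
move=> *; nra.
Qed.

Lemma small_quot (z D : R) : D != 0 -> `|z| <= `|D| / 6 -> - (1/6) <= z / D <= 1/6.
Proof.
move=> D0 hz; rewrite -ler_norml normrM normfV.
have hD : 0 < `|D| by rewrite normr_gt0.
rewrite ler_pdivrMr //; lra.
Qed.

Definition Kc a b c : R := 2 * bigM a b c + 1.
Definition rc a b c : R := `|Dt a b c| / (12 * Kc a b c).
Definition gc a b c : pt R := comb3 a b c (1/3) (1/3) (1/3).

Lemma bigM_ge0 a b c : 0 <= bigM a b c.
Proof.
rewrite /bigM; have := normr_ge0 a.1; have := normr_ge0 b.1; have := normr_ge0 c.1;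
  have := normr_ge0 a.2; have := normr_ge0 b.2; have := normr_ge0 c.2; lra.
Qed.

Lemma diff_le_K a b c (p q : pt R) : p \in [:: a; b; c] -> q \in [:: a; b; c] ->
  `|(psub p q).1| <= Kc a b c /\ `|(psub p q).2| <= Kc a b c.
Proof.
have hp : forall p : pt R, p \in [:: a; b; c] -> `|p.1| + `|p.2| <= bigM a b c.
  move=> p'; rewrite !inE => /orP[/eqP->|/orP[/eqP->|/eqP->]]; rewrite /bigM;
  have := normr_ge0 a.1; have := normr_ge0 b.1; have := normr_ge0 c.1;
  have := normr_ge0 a.2; have := normr_ge0 b.2; have := normr_ge0 c.2; lra.
move=> /hp h1 /hp h2; rewrite /Kc /psub /=.
have := normr_ge0 p.1; have := normr_ge0 q.1; have := normr_ge0 p.2; have := normr_ge0 q.2.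
have := ler_normB p.1 q.1; have := ler_normB p.2 q.2.
move=> *; split; lra.
Qed.

Lemma box_sub_tri a b c : Dt a b c != 0 ->
  `[(gc a b c).1 - rc a b c, (gc a b c).1 + rc a b c] `*`
  `[(gc a b c).2 - rc a b c, (gc a b c).2 + rc a b c] `<=` tri_closed a b c.
Proof.
move=> D0 x; rewrite /= !in_itv /= => -[/andP[x1l x1r] /andP[x2l x2r]].
set v : pt R := psub x (gc a b c).
have hK : 0 < Kc a b c by rewrite /Kc; have := bigM_ge0 a b c; lra.
have hv1 : `|v.1| <= rc a b c by rewrite ler_norml /v /psub /=; apply/andP; split; lra.
have hv2 : `|v.2| <= rc a b c by rewrite ler_norml /v /psub /=; apply/andP; split; lra.
have hr : 2 * rc a b c * Kc a b c = `|Dt a b c| / 6.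
  by rewrite /rc; field; apply/negP => /eqP h; move: hK; rewrite h ltxx.
have [ca1 ca2] := diff_le_K (a:=a) (b:=b) (c:=c) (p := c) (q := a) ltac:(by rewrite !in_cons eqxx ?orbT) ltac:(by rewrite !in_cons eqxx ?orbT).
have [ba1 ba2] := diff_le_K (a:=a) (b:=b) (c:=c) (p := b) (q := a) ltac:(by rewrite !in_cons eqxx ?orbT) ltac:(by rewrite !in_cons eqxx ?orbT).
have c2 := cross_bound hv1 hv2 ca1 ca2; rewrite hr in c2.
have c3 := cross_bound hv1 hv2 ba1 ba2; rewrite hr in c3.
move/(small_quot D0): c2 => /andP[c2l c2r].
move/(small_quot D0): c3 => /andP[c3l c3r].
have e2 : bary2 a b c x = 1/3 + cross v (psub c a) / Dt a b c.
  rewrite /bary2 /v /gc /cross /psub /comb3 /Dt /cross /psub /= in D0 *; field => //.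
have e3 : bary3 a b c x = 1/3 - cross v (psub b a) / Dt a b c.
  rewrite /bary3 /v /gc /cross /psub /comb3 /Dt /cross /psub /= in D0 *; field => //.
rewrite tri_closedE //= /bary1 e2 e3; split; lra.
Qed.

Lemma rc_gt0 a b c : Dt a b c != 0 -> 0 < rc a b c.
Proof.
move=> D0; rewrite /rc divr_gt0 ?normr_gt0 //.
by rewrite /Kc; have := bigM_ge0 a b c; lra.
Qed.

Lemma area_spec a b c : Dt a b c != 0 ->
  0 < area a b c /\ leb2 (R:=R) (tri_closed a b c) = (area a b c)%:E.
Proof.
move=> D0.
have up := leb2_tri_fin D0.
have r0 := rc_gt0 D0.
have lo : (((2 * rc a b c) * (2 * rc a b c))%:E <= leb2 (R:=R) (tri_closed a b c))%E.
  have -> : (2 * rc a b c) * (2 * rc a b c) = (((gc a b c).1 + rc a b c) - ((gc a b c).1 - rc a b c)) *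
     (((gc a b c).2 + rc a b c) - ((gc a b c).2 - rc a b c)) by ring.
  rewrite -leb2_box; [|lra|lra].
  apply: le_measure; rewrite ?inE.
  - by apply: measurableX; exact: measurable_itv.
  - exact: tri_closed_meas.
  - exact: box_sub_tri.
have fin : leb2 (R:=R) (tri_closed a b c) \is a fin_num.
  rewrite ge0_fin_numE; first exact: le_lt_trans up (ltry _).
  apply: le_trans lo; rewrite lee_fin; nra.
split; last by rewrite /area fineK.
rewrite /area; move: lo; rewrite -(fineK fin) lee_fin => lo.
apply: lt_le_trans lo; nra.
Qed.

Lemma pw_cst_integrable a b c (n : pt R) (d p m : R) : Dt a b c != 0 ->
  (leb2 (R:=R)).-integrable (tri_closed a b c) (EFin \o (fun x => if d < dot n x then p else m)).
Proof.
move=> D0; have [_ hA] := area_spec D0.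
apply: measurable_bounded_integrable.
- exact: tri_closed_meas.
- by change (leb2 (R:=R) (tri_closed a b c) < +oo)%E; rewrite hA ltry.
- apply: measurable_funS (subsetT _) _; first exact: measurableT.
  apply: measurable_fun_ifT; try exact: measurable_cst.
  apply: measurable_fun_ltr; first exact: measurable_cst.
  apply: (@eq_measurable_fun _ _ _ _ _ (aff n.1 n.2 0)); last exact: aff_mfun.
  by move=> x _; rewrite /aff /dot addr0.
- exists (`|p| + `|m|); split; rewrite ?num_real // => M hM x _ /=.
  have := normr_ge0 p; have := normr_ge0 m.
  by case: ifP => _ *; lra.
Qed.

Lemma cell_pw a b c (n : pt R) (d qp qm : R) : Dt a b c != 0 ->
  cell_mean a b c (pw n d (fun=> qp) (fun=> qm)) = qm + (qm - qp) * pi0 a b c (zfun n d).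
Proof.
move=> D0; have [hA0 hA] := area_spec D0.
rewrite /pi0 /cell_mean /zfun /pw.
rewrite (_ : (fun x => if d < dot n x then qp else qm) = fun x => qm + (qm - qp) * (if d < dot n x then -1 else 0)); last first.
  by apply/funext => x; case: ifP => _; ring.
rewrite RintegralD; first last.
- apply: (eq_integrable (tri_closed_meas D0) _ _ _ (pw_cst_integrable n d ((qm-qp)*(-1)) ((qm-qp)*0) D0)).
  by move=> x _ /=; case: (d < dot n x).
- apply: (eq_integrable (tri_closed_meas D0) _ _ _ (pw_cst_integrable n d qm qm D0)).
  by move=> x _ /=; case: (d < dot n x).
- exact: tri_closed_meas.
rewrite RintegralZl; first last.
- exact: pw_cst_integrable.
- exact: tri_closed_meas.
rewrite Rintegral_cst; last exact: tri_closed_meas.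
rewrite /area; field.
by rewrite lt0r_neq0.
Qed.
Notation mu := (@lebesgue_measure R).

Lemma int_cont (f : R -> R) : continuous f -> mu.-integrable `[0,1] (EFin \o f).
Proof.
move=> cf; apply: continuous_compact_integrable; first exact: segment_compact.
exact: continuous_subspaceT.
Qed.

Lemma mu01 : mu `[0%R,1%R]%classic = 1%E.
Proof. by rewrite lebesgue_measure_itv /= lte_fin ltr01 oppr0 adde0. Qed.

Lemma cidR : continuous (@id R).
Proof. by move=> x; exact: cvg_id. Qed.

Lemma int_id : \int[mu]_(t in `[0%R,1%R]) t = 1/2.
Proof.
have h := @Rintegration_by_substitution_onem R id 1.
have /h {h} : (0 <= (1:R) <= 1) by rewrite ler01 lexx.
rewrite /onem subrr => /(_ (continuous_subspaceT cidR)) h.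
set I := Rintegral _ _ _.
have : I = 1 - I.
  rewrite {1}/I h /= RintegralB //; last 2 first.
  - by apply: int_cont => x; exact: cvg_cst.
  - by apply: int_cont => x; exact: cvg_id.
  rewrite Rintegral_cst // mul1r; congr (_ - _); rewrite -[RHS]/(fine 1%E); congr fine; exact: mu01.
  by move=> HI; lra.
Qed.

Lemma int_aff (A B : R) : \int[mu]_(t in `[0%R,1%R]) (A + B * t) = A + B / 2.
Proof.
rewrite RintegralD //; last 2 first.
- by apply: int_cont => x; exact: cvg_cst.
- by apply: int_cont => x; apply: continuousM; [exact: cvg_cst| exact: cvg_id].
rewrite RintegralZl //; last by apply: int_cont => x; exact: cvg_id.
rewrite int_id Rintegral_cst //.
have -> : fine (mu `[0%R,1%R]%classic) = 1 by rewrite mu01.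
lra.
Qed.

Definition mid (e : pt R * pt R) : pt R := ((e.1.1 + e.2.1) / 2, (e.1.2 + e.2.2) / 2).

Lemma edge_aff (p : P1 R) e : edge_mean (ev1 p) e = ev1 p (mid e).
Proof.
rewrite /edge_mean.
rewrite (_ : (fun t => ev1 p (padd e.1 (pscale t (psub e.2 e.1)))) =
   fun t => ev1 p e.1 + (p.1.1 * (e.2.1 - e.1.1) + p.1.2 * (e.2.2 - e.1.2)) * t); last first.
  by apply/funext => t; rewrite /ev1 /padd /pscale /psub /=; ring.
by rewrite int_aff /ev1 /mid /=; field.
Qed.

Lemma wfun_path (n : pt R) d e : (fun t => wfun n d (padd e.1 (pscale t (psub e.2 e.1)))) =
  fun t => Num.max ((dot n e.1 - d) + (dot n (psub e.2 e.1)) * t) 0.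
Proof.
apply/funext => t; rewrite /wfun /pw /dist_line.
have -> : dot n (padd e.1 (pscale t (psub e.2 e.1))) = dot n e.1 + dot n (psub e.2 e.1) * t.
  by rewrite /dot /padd /pscale /psub /=; ring.
case: ifP => h.
  rewrite ger0_norm; last by lra.
  by rewrite max_l //; lra.
by rewrite max_r //; move/negbT: h; rewrite -leNgt; lra.
Qed.

Lemma wfun_path_int (n : pt R) d e :
  mu.-integrable `[0%R, 1%R] (EFin \o (fun t => wfun n d (padd e.1 (pscale t (psub e.2 e.1))))).
Proof.
rewrite wfun_path; apply: int_cont => t.
apply: (@continuous_max _ _ (fun t => (dot n e.1 - d) + dot n (psub e.2 e.1) * t) (fun=> 0)).
  apply: cvgD; first exact: cvg_cst.
  by apply: cvgM; [exact: cvg_cst| exact: cvg_id].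
exact: cvg_cst.
Qed.

Lemma aff_cont (A B : R) : continuous (fun t : R => A + B * t).
Proof.
move=> t; apply: (@continuousD _ _ _ (fun=> A) (fun t => B * t)); first exact: cvg_cst.
by apply: continuousM; [exact: cvg_cst| exact: cvg_id].
Qed.

Lemma aff_path_int (A B : R) : mu.-integrable `[0%R, 1%R] (EFin \o (fun t => A + B * t)).
Proof. by apply: int_cont; exact: aff_cont. Qed.

Lemma edge_aff_w (p : P1 R) (k : R) (n : pt R) d e :
  edge_mean (fun x => ev1 p x + k * wfun n d x) e = ev1 p (mid e) + k * edge_mean (wfun n d) e.
Proof.
rewrite -edge_aff /edge_mean /=.
rewrite RintegralD //; last 2 first.
- rewrite (_ : (fun t => ev1 p (padd e.1 (pscale t (psub e.2 e.1)))) =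
   fun t => ev1 p e.1 + (p.1.1 * (e.2.1 - e.1.1) + p.1.2 * (e.2.2 - e.1.2)) * t); last first.
    by apply/funext => t; rewrite /ev1 /padd /pscale /psub /=; ring.
  exact: aff_path_int.
- rewrite (_ : EFin \o _ = fun t : R => (k%:E * (EFin \o (fun t => wfun n d (padd e.1 (pscale t (psub e.2 e.1))))) t)%E).
    by apply: integrableZl => //; exact: wfun_path_int.
  by apply/funext => t; rewrite /= EFinM.
by rewrite RintegralZl //; exact: wfun_path_int.
Qed.

Lemma in_edges a b c (P : pt R * pt R -> Prop) :
  (forall e, e \in edges a b c -> P e) <-> [/\ P (b, c), P (c, a) & P (a, b)].
Proof.
split.
  by move=> h; split; apply: h; rewrite /edges !in_cons eqxx ?orbT.
case=> h1 h2 h3 e; rewrite /edges !in_cons in_nil orbF => /orP[/eqP->//|/orP[/eqP->//|/eqP->//]].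
Qed.

Lemma P1_uniq a b c (p r : P1 R) : Dt a b c != 0 ->
  ev1 p (mid (b, c)) = ev1 r (mid (b, c)) ->
  ev1 p (mid (c, a)) = ev1 r (mid (c, a)) ->
  ev1 p (mid (a, b)) = ev1 r (mid (a, b)) -> p = r.
Proof.
move=> D0; case: p => [[p1 p2] p3]; case: r => [[r1 r2] r3].
set d1 := ev1 _ (mid (b, c)); set d1' := ev1 _ (mid (b, c)).
set d2 := ev1 _ (mid (c, a)); set d2' := ev1 _ (mid (c, a)).
set d3 := ev1 _ (mid (a, b)); set d3' := ev1 _ (mid (a, b)).
move=> h1 h2 h3.
have e1 : (p1 - r1) * Dt a b c = 2 * (c.2 - a.2) * ((d1 - d1') - (d2 - d2')) - 2 * (b.2 - a.2) * ((d1 - d1') - (d3 - d3')).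
  by rewrite /d1 /d1' /d2 /d2' /d3 /d3' /ev1 /mid /Dt /cross /psub /=; field.
have e2 : (p2 - r2) * Dt a b c = 2 * (b.1 - a.1) * ((d1 - d1') - (d3 - d3')) - 2 * (c.1 - a.1) * ((d1 - d1') - (d2 - d2')).
  by rewrite /d1 /d1' /d2 /d2' /d3 /d3' /ev1 /mid /Dt /cross /psub /=; field.
rewrite h1 h2 h3 !subrr !mulr0 subrr in e1 e2.
move/eqP: e1; rewrite mulf_eq0 (negbTE D0) orbF subr_eq0 => /eqP E1.
move/eqP: e2; rewrite mulf_eq0 (negbTE D0) orbF subr_eq0 => /eqP E2.
subst r1 r2; congr pair.
move: h1; rewrite /d1 /d1' /ev1 /= => h1; lra.
Qed.

Lemma P1_exists a b c (W1 W2 W3 : R) : Dt a b c != 0 ->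
  exists p : P1 R, [/\ ev1 p (mid (b, c)) = W1, ev1 p (mid (c, a)) = W2 & ev1 p (mid (a, b)) = W3].
Proof.
move=> D0.
pose D := Dt a b c.
pose q2a := (c.2 - a.2)/D; pose q2b := -(c.1 - a.1)/D; pose q2c := (-a.1*(c.2-a.2) + a.2*(c.1-a.1))/D.
pose q3a := -(b.2-a.2)/D; pose q3b := (b.1-a.1)/D; pose q3c := (a.1*(b.2-a.2) - a.2*(b.1-a.1))/D.
pose q1a := -(q2a+q3a); pose q1b := -(q2b+q3b); pose q1c := 1 - q2c - q3c.
exists ((-2*(W1 * q1a + W2 * q2a + W3 * q3a), -2*(W1 * q1b + W2 * q2b + W3 * q3b)),
   W1+W2+W3 - 2*(W1 * q1c + W2 * q2c + W3 * q3c)).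
have E : forall x, ev1 ((-2*(W1 * q1a + W2 * q2a + W3 * q3a), -2*(W1 * q1b + W2 * q2b + W3 * q3b)),
   W1+W2+W3 - 2*(W1 * q1c + W2 * q2c + W3 * q3c)) x =
   W1 * (1 - 2 * bary1 a b c x) + W2 * (1 - 2 * bary2 a b c x) + W3 * (1 - 2 * bary3 a b c x).
  move=> x; rewrite /ev1 /bary1 /bary2 /bary3 /q1a /q1b /q1c /q2a /q2b /q2c /q3a /q3b /q3c /D /=.
  rewrite /cross /psub /=; field => //.
have m1 : mid (b, c) = comb3 a b c 0 (1/2) (1/2) by rewrite /mid /comb3 /=; congr pair; field.
have m2 : mid (c, a) = comb3 a b c (1/2) 0 (1/2) by rewrite /mid /comb3 /=; congr pair; field.
have m3 : mid (a, b) = comb3 a b c (1/2) (1/2) 0 by rewrite /mid /comb3 /=; congr pair; field.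
have s1 : (0:R) + 1/2 + 1/2 = 1 by field.
have s2 : (1/2:R) + 0 + 1/2 = 1 by field.
have s3 : (1/2:R) + 1/2 + 0 = 1 by field.
have [b11 b12 b13] := bary_comb D0 s1.
have [b21 b22 b23] := bary_comb D0 s2.
have [b31 b32 b33] := bary_comb D0 s3.
by split; rewrite E ?m1 ?m2 ?m3 ?b11 ?b12 ?b13 ?b21 ?b22 ?b23 ?b31 ?b32 ?b33; field.
Qed.

Lemma piCR_spec a b c (w : pt R -> R) : Dt a b c != 0 ->
  [/\ ev1 (piCR a b c w) (mid (b, c)) = edge_mean w (b, c),
      ev1 (piCR a b c w) (mid (c, a)) = edge_mean w (c, a) &
      ev1 (piCR a b c w) (mid (a, b)) = edge_mean w (a, b)].
Proof.
move=> D0.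
have [p [h1 h2 h3]] := P1_exists (edge_mean w (b, c)) (edge_mean w (c, a)) (edge_mean w (a, b)) D0.
have : [set p : P1 R | forall e, e \in edges a b c -> edge_mean (ev1 p) e = edge_mean w e] (piCR a b c w).
  apply: (@xgetI _ _ _ p) => /=.
  by apply/in_edges; split; rewrite edge_aff.
by move=> /= /in_edges[]; rewrite !edge_aff.
Qed.

Lemma pos_small (l k s : R) : 0 < l -> 0 < s -> s <= l / (`|k| + 1) -> 0 < l + s * k.
Proof.
move=> l0 s0; have k1 : 0 < `|k| + 1 by have := normr_ge0 k; lra.
rewrite ler_pdivlMr // => hs.
have : - `|k| <= k <= `|k| by rewrite -ler_norml.
move=> /andP[hk _]; nra.
Qed.

Lemma pos_ratio (l k : R) : 0 < l -> 0 < l / (`|k| + 1).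
Proof. move=> l0; apply: divr_gt0 => //; have := normr_ge0 k; lra. Qed.

Lemma perturb a b c x (v : pt R) (l0 k0 : R) : Dt a b c != 0 -> tri_open a b c x -> 0 < l0 ->
  exists s, [/\ 0 < s, tri_open a b c (padd x (pscale s v)) & 0 < l0 + s * k0].
Proof.
move=> D0; rewrite tri_openE //= => -[h1 h2 h3] hl0.
pose k2 := cross v (psub c a) / Dt a b c.
pose k3 := cross (psub b a) v / Dt a b c.
pose k1 := - (k2 + k3).
have e2 : forall s, bary2 a b c (padd x (pscale s v)) = bary2 a b c x + s * k2.
  by move=> s; rewrite /k2 /bary2 /cross /padd /pscale /psub /=; field.
have e3 : forall s, bary3 a b c (padd x (pscale s v)) = bary3 a b c x + s * k3.
  by move=> s; rewrite /k3 /bary3 /cross /padd /pscale /psub /=; field.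
have e1 : forall s, bary1 a b c (padd x (pscale s v)) = bary1 a b c x + s * k1.
  by move=> s; rewrite /bary1 e2 e3 /k1; ring.
pose m1 := bary1 a b c x / (`|k1| + 1).
pose m2 := bary2 a b c x / (`|k2| + 1).
pose m3 := bary3 a b c x / (`|k3| + 1).
pose m0 := l0 / (`|k0| + 1).
pose s := Num.min (Num.min m1 m2) (Num.min m3 m0).
have sp : 0 < s by rewrite /s !lt_min !pos_ratio.
have := lexx s; rewrite {2}/s !le_min => /andP[/andP[s1 s2] /andP[s3 s0]].
exists s; split => //; last exact: pos_small.
rewrite e1 e2 e3; split; exact: pos_small.
Qed.
Lemma alg_core (n1 n2 A11 A12 A21 A22 pq g1 g2 : R) : n1 * n1 + n2 * n2 = 1 ->
  A11 * n2 - A12 * n1 = 0 -> A21 * n2 - A22 * n1 = 0 -> A11 + A22 = 0 ->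
  2 * A11 * n1 + (A12 + A21) * n2 - pq * n1 = g1 ->
  (A21 + A12) * n1 + 2 * A22 * n2 - pq * n2 = g2 ->
  [/\ A11 = (g1 + pq * n1) * n1, A12 = (g1 + pq * n1) * n2, A21 = (g2 + pq * n2) * n1,
      A22 = (g2 + pq * n2) * n2 & (g1 + pq * n1) * n1 + (g2 + pq * n2) * n2 = 0].
Proof.
move=> hn h1 h2 hd j1 j2.
pose a1 := A11 * n1 + A12 * n2; pose a2 := A21 * n1 + A22 * n2.
have E11 : A11 = a1 * n1.
  have : A11 - a1 * n1 = n2 * (A11 * n2 - A12 * n1) + A11 * (1 - (n1 * n1 + n2 * n2)) by rewrite /a1; ring.
  rewrite h1 hn; lra.
have E12 : A12 = a1 * n2.
  have : A12 - a1 * n2 = - n1 * (A11 * n2 - A12 * n1) + A12 * (1 - (n1 * n1 + n2 * n2)) by rewrite /a1; ring.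
  rewrite h1 hn; lra.
have E21 : A21 = a2 * n1.
  have : A21 - a2 * n1 = n2 * (A21 * n2 - A22 * n1) + A21 * (1 - (n1 * n1 + n2 * n2)) by rewrite /a2; ring.
  rewrite h2 hn; lra.
have E22 : A22 = a2 * n2.
  have : A22 - a2 * n2 = - n1 * (A21 * n2 - A22 * n1) + A22 * (1 - (n1 * n1 + n2 * n2)) by rewrite /a2; ring.
  rewrite h2 hn; lra.
have dn : a1 * n1 + a2 * n2 = 0 by rewrite -E11 -E22.
have Ea1 : a1 = g1 + pq * n1.
  rewrite -j1 E11 E12 E21.
  have : a1 * (n1 * n1 + n2 * n2) + n1 * (a1 * n1 + a2 * n2) = 2 * (a1 * n1) * n1 + (a1 * n2 + a2 * n1) * n2 by ring.
  rewrite hn dn; lra.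
have Ea2 : a2 = g2 + pq * n2.
  rewrite -j2 E21 E12 E22.
  have : a2 * (n1 * n1 + n2 * n2) + n2 * (a1 * n1 + a2 * n2) = (a2 * n1 + a1 * n2) * n1 + 2 * (a2 * n2) * n2 by ring.
  rewrite hn dn; lra.
by rewrite -Ea1 -Ea2.
Qed.

Lemma bary_seg a b c x y (s : R) : Dt a b c != 0 ->
  [/\ bary1 a b c (padd x (pscale s (psub y x))) = (1 - s) * bary1 a b c x + s * bary1 a b c y,
      bary2 a b c (padd x (pscale s (psub y x))) = (1 - s) * bary2 a b c x + s * bary2 a b c y &
      bary3 a b c (padd x (pscale s (psub y x))) = (1 - s) * bary3 a b c x + s * bary3 a b c y].
Proof.
move=> D0; rewrite /bary1 /bary2 /bary3 /cross /padd /pscale /psub /=.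
by split; field.
Qed.

Lemma conv_pos (l s u v : R) : 0 < s < 1 -> 0 < u -> 0 < v -> 0 < (1 - s) * u + s * v.
Proof. by move=> /andP[s0 s1] u0 v0; nra. Qed.

Lemma Gamma_two a b c (n : pt R) d : Dt a b c != 0 ->
  (exists x, Tplus a b c n d x) -> (exists x, Tminus a b c n d x) ->
  exists p0, Gamma a b c n d p0 /\ exists s, 0 < s /\ Gamma a b c n d (padd p0 (pscale s (rot_m90 n))).
Proof.
move=> D0 [xp [hp1 hp2]] [xm [hm1 hm2]].
pose l := (dot n xp - d) / (dot n xp - dot n xm).
have hl : 0 < l < 1.
  rewrite /l; apply/andP; split; first by apply: divr_gt0; lra.
  by rewrite ltr_pdivrMr; lra.
pose p0 := padd xp (pscale l (psub xm xp)).
have hp0 : tri_open a b c p0.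
  move: hp1 hm1; rewrite !(tri_openE D0) /= => -[u1 u2 u3] [v1 v2 v3].
  have [-> -> ->] := bary_seg xp xm l D0.
  by split; apply: conv_pos.
have dp0 : dot n p0 = d.
  rewrite /p0 /l /dot /padd /pscale /psub /=.
  rewrite /dot in hp2 hm2 *; field; lra.
have [s [s0 hs _]] := perturb (rot_m90 n) 0 D0 hp0 ltr01.
exists p0; split => //; exists s; split => //; split => //.
by rewrite -dp0 /dot /padd /pscale /rot_m90 /=; ring.
Qed.

Definition shiftP (r : P1 R) (ga : R) (n : pt R) (d : R) : P1 R :=
  (r.1.1 + ga * n.1, r.1.2 + ga * n.2, r.2 - ga * d).

Lemma jump_form a b c (n : pt R) d (g : pt R) (vp vm : P1v R) (qp qm : R) :
  Dt a b c != 0 -> dot n n = 1 ->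
  (exists x, Tplus a b c n d x) -> (exists x, Tminus a b c n d x) ->
  (forall x, Gamma a b c n d x -> evv vp x = evv vm x) ->
  divv vp = divv vm ->
  psub (sigma_n 1 vp qp n) (sigma_n 1 vm qm n) = g ->
  [/\ vp.1 = shiftP vm.1 (g.1 + (qp - qm) * n.1) n d,
      vp.2 = shiftP vm.2 (g.2 + (qp - qm) * n.2) n d &
      (g.1 + (qp - qm) * n.1) * n.1 + (g.2 + (qp - qm) * n.2) * n.2 = 0].
Proof.
move=> D0 hn Tp Tm hG hdiv hJ.
have [p0 [G0 [s [s0 Gs]]]] := Gamma_two D0 Tp Tm.
have dp0 : dot n p0 = d by case: G0.
move: (hG _ G0) (hG _ Gs) hdiv hJ; clear hG Tp Tm.
case: vp => [[[p11 p12] p13] [[p21 p22] p23]]; case: vm => [[[m11 m12] m13] [[m21 m22] m23]].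
case: g => g1 g2; move: G0 Gs; case: n hn dp0 => n1 n2 hn dp0 _ _.
case: p0 dp0 => x1 x2 dp0.
rewrite /evv /ev1 /divv /dv /psub /sigma_n /sigma /eps /dv /padd /pscale /rot_m90 /shiftP /=.
rewrite /dot /= in hn dp0.
move=> [e1 e2] [f1 f2] hd [j1 j2].
have k1 : (p11 - m11) * n2 - (p12 - m12) * n1 = 0.
  have : s * ((p11 - m11) * n2 - (p12 - m12) * n1) = 0.
    have : (p11 * (x1 + s * n2) + p12 * (x2 + s * - n1) + p13) - (p11 * x1 + p12 * x2 + p13)
      - ((m11 * (x1 + s * n2) + m12 * (x2 + s * - n1) + m13) - (m11 * x1 + m12 * x2 + m13)) = 0.
      by rewrite f1 e1; ring.
    by move=> h; rewrite -h; ring.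
  by move/eqP; rewrite mulf_eq0 gt_eqF //= => /eqP.
have k2 : (p21 - m21) * n2 - (p22 - m22) * n1 = 0.
  have : s * ((p21 - m21) * n2 - (p22 - m22) * n1) = 0.
    have : (p21 * (x1 + s * n2) + p22 * (x2 + s * - n1) + p23) - (p21 * x1 + p22 * x2 + p23)
      - ((m21 * (x1 + s * n2) + m22 * (x2 + s * - n1) + m23) - (m21 * x1 + m22 * x2 + m23)) = 0.
      by rewrite f2 e2; ring.
    by move=> h; rewrite -h; ring.
  by move/eqP; rewrite mulf_eq0 gt_eqF //= => /eqP.
have kd : (p11 - m11) + (p22 - m22) = 0 by lra.
have J1 : 2 * (p11 - m11) * n1 + ((p12 - m12) + (p21 - m21)) * n2 - (qp - qm) * n1 = g1.
  by rewrite -j1; field.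
have J2 : ((p21 - m21) + (p12 - m12)) * n1 + 2 * (p22 - m22) * n2 - (qp - qm) * n2 = g2.
  by rewrite -j2; field.
have [E11 E12 E21 E22 En] := alg_core hn k1 k2 kd J1 J2.
split => //.
- congr pair; [congr pair|]; try lra.
  have -> : p13 = m13 - (p11 - m11) * x1 - (p12 - m12) * x2 by lra.
  rewrite E11 E12 -dp0; ring.
- congr pair; [congr pair|]; try lra.
  have -> : p23 = m23 - (p21 - m21) * x1 - (p22 - m22) * x2 by lra.
  rewrite E21 E22 -dp0; ring.
Qed.

Lemma jump_conv a b c (n : pt R) d (vp vm : P1v R) (qp qm g1 g2 : R) :
  dot n n = 1 -> vp.1 = shiftP vm.1 g1 n d -> vp.2 = shiftP vm.2 g2 n d ->
  g1 * n.1 + g2 * n.2 = 0 ->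
  [/\ (forall x, Gamma a b c n d x -> evv vp x = evv vm x),
      divv vp = divv vm &
      psub (sigma_n 1 vp qp n) (sigma_n 1 vm qm n) = (g1 - (qp - qm) * n.1, g2 - (qp - qm) * n.2)].
Proof.
case: vp => vp1 vp2; case: vm => vm1 vm2 /= hn -> -> hg.
split.
- move=> x [_ hx]; rewrite /evv /ev1 /shiftP /=; rewrite /dot in hx.
  congr pair; rewrite -hx; ring.
- rewrite /divv /dv /shiftP /=; rewrite /dot in hn.
  lra.
- rewrite /psub /sigma_n /sigma /eps /dv /shiftP /=; rewrite /dot in hn.
  congr pair.
  + have : g1 * (n.1 * n.1 + n.2 * n.2) + n.1 * (g1 * n.1 + g2 * n.2) - (qp - qm) * n.1 = g1 - (qp - qm) * n.1.
      by rewrite hn hg; ring.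
    by move <-; field.
  + have : g2 * (n.1 * n.1 + n.2 * n.2) + n.2 * (g1 * n.1 + g2 * n.2) - (qp - qm) * n.2 = g2 - (qp - qm) * n.2.
      by rewrite hn hg; ring.
    by move <-; field.
Qed.

Lemma ev1_scale (k : R) (p : P1 R) x : ev1 (P1scale k p) x = k * ev1 p x.
Proof. by rewrite /ev1 /P1scale /=; ring. Qed.

Lemma comp_dof a b c (n : pt R) d (r : P1 R) (ga : R) : Dt a b c != 0 ->
  (forall e, e \in edges a b c -> edge_mean (fun x => ev1 r x + ga * wfun n d x) e = 0) <->
  r = P1scale (- ga) (piCR a b c (wfun n d)).
Proof.
move=> D0; have [w1 w2 w3] := piCR_spec (wfun n d) D0.
rewrite in_edges !edge_aff_w -w1 -w2 -w3.
split.
- case=> h1 h2 h3; apply: P1_uniq D0 _ _ _; rewrite ev1_scale; lra.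
- by move=> ->; rewrite !ev1_scale; split; ring.
Qed.

Lemma pw_comp1 (n : pt R) d (vp vm : P1v R) ga : vp.1 = shiftP vm.1 ga n d ->
  (fun x => (pw n d (evv vp) (evv vm) x).1) = fun x => ev1 vm.1 x + ga * wfun n d x.
Proof.
move=> h; apply/funext => x; rewrite /wfun /dist_line /pw /evv h /shiftP /ev1 /=.
case: ifP => hx.
  rewrite ger0_norm; last by lra.
  rewrite /dot /=; ring.
by rewrite /= mulr0 addr0.
Qed.

Lemma pw_comp2 (n : pt R) d (vp vm : P1v R) ga : vp.2 = shiftP vm.2 ga n d ->
  (fun x => (pw n d (evv vp) (evv vm) x).2) = fun x => ev1 vm.2 x + ga * wfun n d x.
Proof.
move=> h; apply/funext => x; rewrite /wfun /dist_line /pw /evv h /shiftP /ev1 /=.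
case: ifP => hx.
  rewrite ger0_norm; last by lra.
  rewrite /dot /=; ring.
by rewrite /= mulr0 addr0.
Qed.

Lemma side_det a b c (al1 al2 be : R) (p r : P1 R) : Dt a b c != 0 ->
  (exists x, tri_open a b c x /\ 0 < al1 * x.1 + al2 * x.2 + be) ->
  (forall y, tri_open a b c y -> 0 < al1 * y.1 + al2 * y.2 + be -> ev1 p y = ev1 r y) -> p = r.
Proof.
move=> D0 [x [hx lx]] h.
have [s1 [s10 hy1 ly1]] := perturb (1, 0) al1 D0 hx lx.
have [s2 [s20 hy2 ly2]] := perturb (0, 1) al2 D0 hx lx.
have q0 := h x hx lx.
have q1 : ev1 p (padd x (pscale s1 (1, 0))) = ev1 r (padd x (pscale s1 (1, 0))).
  apply: h hy1 _; move: ly1; rewrite /padd /pscale /=; lra.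
have q2 : ev1 p (padd x (pscale s2 (0, 1))) = ev1 r (padd x (pscale s2 (0, 1))).
  apply: h hy2 _; move: ly2; rewrite /padd /pscale /=; lra.
move: q0 q1 q2; clear h; case: p => [[p1 p2] p3]; case: r => [[r1 r2] r3].
rewrite /ev1 /padd /pscale /= => q0 q1 q2.
have e1 : s1 * (p1 - r1) = 0 by lra.
have e2 : s2 * (p2 - r2) = 0 by lra.
move/eqP: e1; rewrite mulf_eq0 gt_eqF //= subr_eq0 => /eqP E1.
move/eqP: e2; rewrite mulf_eq0 gt_eqF //= subr_eq0 => /eqP E2.
subst; congr pair; lra.
Qed.
End S.

Theorem lemma4p2 (R : realType) (a b c n : pt R) (d : R)
  (nondeg : cross (psub b a) (psub c a) != 0)
  (n_unit : dot n n = 1)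
  (Tp_ne : exists x, Tplus a b c n d x)
  (Tm_ne : exists x, Tminus a b c n d x) :
  (forall (vp vm : P1v R) (qp qm : R),
     Jcond a b c n d n vp vm qp qm <->
     [/\ vp = P1vzero R, vm = P1vzero R,
         qp = -1 - pi0 a b c (zfun n d)
       & qm = 0 - pi0 a b c (zfun n d)]) /\
  (forall (vp vm : P1v R) (qp qm : R),
     Jcond a b c n d (rot_m90 n) vp vm qp qm <->
     [/\ (forall x, Tplus a b c n d x ->
            evv vp x = pscale (wfun n d x - ev1 (piCR a b c (wfun n d)) x) (rot_m90 n)),
         (forall x, Tminus a b c n d x ->
            evv vm x = pscale (wfun n d x - ev1 (piCR a b c (wfun n d)) x) (rot_m90 n)),
         qp = 0
       & qm = 0]).
Proof.
have D0 : Dt a b c != 0 := nondeg.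
set pi := pi0 a b c (zfun n d).
set CR := piCR a b c (wfun n d).
have hn : n.1 * n.1 + n.2 * n.2 = 1 by exact: n_unit.
split => vp vm qp qm; split.
-
  case=> [[dof1 [dof2 dofq]] hG hdiv hJ].
  have [s1 s2 hg] := jump_form D0 n_unit Tp_ne Tm_ne hG hdiv hJ.
  have pq : qp - qm = -1.
    have : (1 + (qp - qm)) * (n.1 * n.1 + n.2 * n.2) = 0 by rewrite -hg; ring.
    rewrite hn mulr1; lra.
  have g1 : n.1 + (qp - qm) * n.1 = 0 by rewrite pq; ring.
  have g2 : n.2 + (qp - qm) * n.2 = 0 by rewrite pq; ring.
  rewrite g1 in s1; rewrite g2 in s2.
  rewrite (pw_comp1 s1) in dof1; rewrite (pw_comp2 s2) in dof2.
  move/(comp_dof _ _ _ _ D0): dof1; rewrite oppr0 => m1.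
  move/(comp_dof _ _ _ _ D0): dof2; rewrite oppr0 => m2.
  have z : P1scale 0 (piCR a b c (wfun n d)) = P1zero R by rewrite /P1scale !mul0r.
  rewrite z in m1 m2.
  rewrite cell_pw // -/pi in dofq.
  have hvm : vm = P1vzero R by case: vm m1 m2 {s1 s2 hG hdiv hJ} => ? ? /= -> ->.
  split => //.
  + case: vp s1 s2 {hG hdiv hJ} => ? ? /= -> ->; rewrite m1 m2 /shiftP /P1zero /P1vzero /=.
    by rewrite !mul0r !addr0 subr0.
  + have : qm + pi = 0 by move: dofq; rewrite -opprB pq; lra.
    lra.
  + have : qm + pi = 0 by move: dofq; rewrite -opprB pq; lra.
    lra.
-
  case=> -> -> -> ->.
  have s0 : forall r : P1 R, r = P1zero R -> r = shiftP (P1zero R) 0 n d.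
    by move=> r ->; rewrite /shiftP /P1zero /= !mul0r !addr0 subr0.
  have hg0 : 0 * n.1 + 0 * n.2 = 0 by ring.
  have [hG hdiv hJ] := jump_conv (vp := P1vzero R) (vm := P1vzero R) a b c (-1 - pi) (0 - pi) n_unit (s0 _ erefl) (s0 _ erefl) hg0.
  split => //; last first.
    rewrite hJ; case: (n) => n1 n2 /=; congr pair; ring.
  split; [|split].
  + rewrite (pw_comp1 (vp := P1vzero R) (vm := P1vzero R) (s0 _ erefl)); apply/(comp_dof _ _ _ _ D0).
    by rewrite /P1scale /P1zero /= oppr0 !mul0r.
  + rewrite (pw_comp2 (vp := P1vzero R) (vm := P1vzero R) (s0 _ erefl)); apply/(comp_dof _ _ _ _ D0).
    by rewrite /P1scale /P1zero /= oppr0 !mul0r.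
  + rewrite cell_pw // -/pi; ring.
-
  case=> [[dof1 [dof2 dofq]] hG hdiv hJ].
  have [s1 s2 hg] := jump_form D0 n_unit Tp_ne Tm_ne hG hdiv hJ.
  rewrite /rot_m90 /= in s1 s2 hg.
  have pq : qp - qm = 0.
    have : (qp - qm) * (n.1 * n.1 + n.2 * n.2) = 0 by rewrite -hg; ring.
    by rewrite hn mulr1.
  rewrite pq mul0r addr0 in s1; rewrite pq mul0r addr0 in s2.
  rewrite (pw_comp1 s1) in dof1; rewrite (pw_comp2 s2) in dof2.
  move/(comp_dof _ _ _ _ D0): dof1 => m1.
  move/(comp_dof _ _ _ _ D0): dof2; rewrite opprK => m2.
  rewrite cell_pw // -/pi in dofq.
  have hqm : qm = 0 by move: dofq; rewrite -opprB pq oppr0 mul0r addr0.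
  have hqp : qp = 0 by lra.
  split => // x.
  + case=> _ hx; rewrite /evv s1 s2 m1 m2 -/CR /shiftP /pscale /rot_m90 /wfun /dist_line /pw /ev1 /P1scale /=.
    rewrite hx ger0_norm; last by lra.
    rewrite /dot; congr pair; ring.
  + case=> _ hx; rewrite /evv m1 m2 -/CR /pscale /rot_m90 /wfun /dist_line /pw /ev1 /P1scale /=.
    have -> : (d < dot n x) = false by apply/negbTE; rewrite -leNgt ltW.
    congr pair; ring.
-
  case=> hp hm -> ->.
  have [xp [hxp1 hxp2]] := Tp_ne.
  have [xm [hxm1 hxm2]] := Tm_ne.
  have ep1 : vp.1 = shiftP (P1scale (- n.2) CR) n.2 n d.
    apply: (side_det (al1 := n.1) (al2 := n.2) (be := - d) D0).
      by exists xp; split => //; rewrite /dot in hxp2; lra.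
    move=> y hy ly; have hy' : Tplus a b c n d y by split => //; rewrite /dot; lra.
    move: (hp y hy'); rewrite /evv => -[-> _].
    rewrite /pscale /rot_m90 /wfun /dist_line /pw /shiftP /ev1 /P1scale /=.
    have -> : (d < dot n y) = true by apply/idP; rewrite /dot; lra.
    rewrite ger0_norm /dot; last by rewrite /dot; lra.
    ring.
  have ep2 : vp.2 = shiftP (P1scale (n.1) CR) (- n.1) n d.
    apply: (side_det (al1 := n.1) (al2 := n.2) (be := - d) D0).
      by exists xp; split => //; rewrite /dot in hxp2; lra.
    move=> y hy ly; have hy' : Tplus a b c n d y by split => //; rewrite /dot; lra.
    move: (hp y hy'); rewrite /evv => -[_ ->].
    rewrite /pscale /rot_m90 /wfun /dist_line /pw /shiftP /ev1 /P1scale /=.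
    have -> : (d < dot n y) = true by apply/idP; rewrite /dot; lra.
    rewrite ger0_norm /dot; last by rewrite /dot; lra.
    ring.
  have em1 : vm.1 = P1scale (- n.2) CR.
    apply: (side_det (al1 := - n.1) (al2 := - n.2) (be := d) D0).
      by exists xm; split => //; rewrite /dot in hxm2; lra.
    move=> y hy ly; have hy' : Tminus a b c n d y by split => //; rewrite /dot; lra.
    move: (hm y hy'); rewrite /evv => -[-> _].
    rewrite /pscale /rot_m90 /wfun /dist_line /pw /shiftP /ev1 /P1scale /=.
    have -> : (d < dot n y) = false by apply/negbTE; rewrite -leNgt /dot; lra.
    ring.
  have em2 : vm.2 = P1scale (n.1) CR.
    apply: (side_det (al1 := - n.1) (al2 := - n.2) (be := d) D0).
      by exists xm; split => //; rewrite /dot in hxm2; lra.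
    move=> y hy ly; have hy' : Tminus a b c n d y by split => //; rewrite /dot; lra.
    move: (hm y hy'); rewrite /evv => -[_ ->].
    rewrite /pscale /rot_m90 /wfun /dist_line /pw /shiftP /ev1 /P1scale /=.
    have -> : (d < dot n y) = false by apply/negbTE; rewrite -leNgt /dot; lra.
    ring.
  have s1 : vp.1 = shiftP vm.1 n.2 n d by rewrite ep1 em1.
  have s2 : vp.2 = shiftP vm.2 (- n.1) n d by rewrite ep2 em2.
  have hg0 : n.2 * n.1 + (- n.1) * n.2 = 0 by ring.
  have [hG hdiv hJ] := jump_conv a b c 0 0 n_unit s1 s2 hg0.
  split => //; last first.
    by rewrite hJ /rot_m90 subrr !mul0r !subr0.
  split; [|split].
  + rewrite (pw_comp1 s1); apply/(comp_dof _ _ _ _ D0); exact: em1.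
  + rewrite (pw_comp2 s2); apply/(comp_dof _ _ _ _ D0); rewrite opprK; exact: em2.
  + by rewrite cell_pw // subrr mul0r addr0.
Qed.
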